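(* Let $K$ be a field, $T$ a subgroup of $K^\times$, and $w$ a valuation on the factor hyperfield $K_T$. Then there exists a valuation $v$ on the field $K$ such that $T\subseteq\mathcal{O}_v^\times$ and $w=v_T$, where $v_T(xT):=vx$.
   Context: A hyperfield is $(F,+,\cdot,0,1)$ with $+$ a multivalued operation making $(F,+,0)$ a canonical hypergroup (associative, commutative, unique inverses $-x$ with $0\in x+(-x)$, and $z\in x+y\Rightarrow y\in z+(-x)$), $(F,\cdot)$ commutative with $0$ absorbing, $x(y+z)=xy+xz$, and $F\setminus\{0\}$ an abelian group with neutral $1\neq 0$. Valuation: for an ordered abelian group $\Gamma$ and $\infty>\Gamma$ with $\gamma+\infty=\infty+\gamma=\infty$, a valuation on a hyperfield $F$ is a surjective map $v:F\to\Gamma\cup\{\infty\}$ with $vx=\infty\iff x=0$, $v(xy)=vx+vy$, and $z\in x+y\Rightarrow vz\ge\min\{vx,vy\}$. A field is regarded as a hyperfield with singleton sums, so this includes classical (Krull) valuations. $\mathcal{O}_v^\times:=\{x: vx=0\}$. Factor hyperfield: for a field $K$ and a subgroup $T\le K^\times$, $K_T$ is the set of cosets $xT$ ($x\in K$, $0T=\{0\}$) with $xT+yT:=\{(x+yt)T:t\in T\}$ and $xT\cdot yT:=xyT$. *)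

(* Defs.v *)
From HB Require Import structures.
From mathcomp Require Import all_boot all_order all_algebra.
Set Implicit Arguments. Unset Strict Implicit. Unset Printing Implicit Defensive.
Import GRing.Theory.
Local Open Scope ring_scope.

Definition ordered_abelian_group (G : zmodType) (le : rel G) : Prop :=
  [/\ (forall a, le a a),
      (forall a b, le a b -> le b a -> a = b),
      (forall a b c, le a b -> le b c -> le a c),
      (forall a b, le a b \/ le b a)
    & (forall a b c, le a b -> le (a + c) (b + c))].

(* Gamma ∪ {∞} is modelled by [option G], with [None] = ∞. *)
Definition oadd (G : zmodType) (a b : option G) : option G :=
  match a, b with Some x, Some y => Some (x + y) | _, _ => None end.

Definition ole (G : zmodType) (le : rel G) (a b : option G) : bool :=
  match a, b with
  | _, None => true
  | None, Some _ => false
  | Some x, Some y => le x y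
  end.

Definition omin (G : zmodType) (le : rel G) (a b : option G) : option G :=
  if ole le a b then a else b.

Definition subgroup_units (K : fieldType) (T : K -> Prop) : Prop :=
  [/\ T 1,
      (forall x, T x -> x != 0),
      (forall x y, T x -> T y -> T (x * y))
    & (forall x, T x -> T x^-1)].

Definition coset (K : fieldType) (T : K -> Prop) (x : K) : K -> Prop :=
  fun y => exists2 t, T t & y = x * t.

Record factorHF (K : fieldType) (T : K -> Prop) := FactorHF {
  fhf_set : K -> Prop;
  fhf_coset : exists x, fhf_set = coset T x }.

Definition mkKT (K : fieldType) (T : K -> Prop) (x : K) : factorHF T :=
  @FactorHF K T (coset T x) (ex_intro _ x erefl).

Definition hf_add_mem (K : fieldType) (T : K -> Prop) (A B C : factorHF T) : Prop :=
  exists x y t, [/\ A = mkKT T x, B = mkKT T y, T t & C = mkKT T (x + y * t)].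

Definition hf_mul_is (K : fieldType) (T : K -> Prop) (A B C : factorHF T) : Prop :=
  exists x y, [/\ A = mkKT T x, B = mkKT T y & C = mkKT T (x * y)].

Definition hf_valuation (K : fieldType) (T : K -> Prop) (G : zmodType) (le : rel G)
    (w : factorHF T -> option G) : Prop :=
  [/\ (forall g : option G, exists A, w A = g),
      (forall A, w A = None <-> A = mkKT T 0),
      (forall A B C, hf_mul_is A B C -> w C = oadd (w A) (w B))
    & (forall A B C, hf_add_mem A B C -> ole le (omin le (w A) (w B)) (w C))].

Definition field_valuation (K : fieldType) (G : zmodType) (le : rel G)
    (v : K -> option G) : Prop :=
  [/\ (forall g : option G, exists x, v x = g),
      (forall x, v x = None <-> x = 0),
      (forall x y, v (x * y) = oadd (v x) (v y))
    & (forall x y, ole le (omin le (v x) (v y)) (v (x + y)))].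

(* Main.v *)
Require Import Defs.
From mathcomp Require Import all_boot all_order all_algebra.
From Stdlib Require Import FunctionalExtensionality PropExtensionality ProofIrrelevance.
Local Open Scope ring_scope.
Import GRing.Theory.

Lemma fhf_ext (K : fieldType) (T : K -> Prop) (A B : factorHF T) :
  fhf_set A = fhf_set B -> A = B.
Proof.
case: A => a pa; case: B => b pb /= e; subst b.
by rewrite (proof_irrelevance _ pa pb).
Qed.

Lemma mkKT_eq (K : fieldType) (T : K -> Prop) (x x' : K) :
  (forall y, coset T x y <-> coset T x' y) -> mkKT T x = mkKT T x'.
Proof.
move=> H; apply: fhf_ext => /=; apply: functional_extensionality => y.
by apply: propositional_extensionality.
Qed.

Theorem lemma3p6 (K : fieldType) (T : K -> Prop) (G : zmodType) (le : rel G)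
    (w : factorHF T -> option G) :
  subgroup_units T ->
  ordered_abelian_group le ->
  hf_valuation le w ->
  exists v : K -> option G,
    [/\ field_valuation le v,
        (forall t, T t -> v t = Some 0)
      & (forall x, w (mkKT T x) = v x)].
Proof.
move=> [T1 Tnz TM TV] _ [wsurj wnone wmul wadd].
exists (fun x => w (mkKT T x)); split=> //; last first.
  move=> t Tt.
  have -> : mkKT T t = mkKT T 1.
    apply: mkKT_eq => y; split.
      by case=> s Ts ->; exists (t * s); [exact: TM | rewrite mul1r].
    case=> s Ts ->; exists (t^-1 * s); first by apply: TM => //; apply: TV.
    by rewrite mul1r mulrA divff ?mul1r //; apply: Tnz.
  have h1 := wmul _ _ _ (ex_intro _ 1 (ex_intro _ 1 (And3 erefl erefl erefl)) :
      hf_mul_is (mkKT T 1) (mkKT T 1) (mkKT T (1 * 1))).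
  rewrite mulr1 in h1.
  case E: (w (mkKT T 1)) h1 => [a|] /=.
    move=> [] h; have : a + a - a = a - a by rewrite -h.
    by rewrite addrK subrr => ->.
  move=> _; move/wnone: E => E.
  have : coset T 1 0.
    by move: (f_equal (@fhf_set _ _) E) => /= ->; exists 1 => //; rewrite mul0r.
  case=> s Ts /esym /eqP; rewrite mul1r => /eqP s0.
  by move: (Tnz _ Ts); rewrite s0 eqxx.
split.
- move=> g; have [A HA] := wsurj g; case: A HA => a [x ex] HA.
  exists x; rewrite -HA; congr w; apply: fhf_ext => /=; by rewrite ex.
- move=> x; rewrite wnone; split; last by move=> E; rewrite E.
  move=> E.
  have : coset T x 0.
    move: (f_equal (@fhf_set _ _) E) => /= ->; exists 1 => //; by rewrite mul0r.
  case=> s Ts /esym /eqP; rewrite mulf_eq0 => /orP [/eqP //|/eqP s0].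
  by move: (Tnz _ Ts); rewrite s0 eqxx.
- move=> x y; apply: wmul; exists x, y; split=> //.
- move=> x y; apply: wadd; exists x, y, 1; split=> //; by rewrite mulr1.
Qed.
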